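(* Let $M$ be a smooth $n$-manifold with a torsion-free linear connection $\nabla$ and a symmetric $(0,2)$-tensor field $c$, and let $\overline{g}_{\nabla,c}$ be the modified Riemannian extension on $T^{\ast}M$. Let $\widetilde{\nabla}$ be the unique linear connection on $T^{\ast}M$ satisfying $\widetilde{\nabla}\,\overline{g}_{\nabla,c}=0$ whose torsion $\widetilde{T}$ is given in the adapted frame by $\widetilde{T}(E_i,E_j)=-p_sR_{ijr}^{\ \ \ s}E_{\overline{r}}$ and $\widetilde{T}(E_i,E_{\overline{j}})=\widetilde{T}(E_{\overline{i}},E_j)=\widetilde{T}(E_{\overline{i}},E_{\overline{j}})=0$. Then, with respect to the adapted frame, $$\widetilde{\nabla}_{E_{\overline{i}}}E_{\overline{j}}=0,\quad \widetilde{\nabla}_{E_{\overline{i}}}E_{j}=0,\quad \widetilde{\nabla}_{E_{i}}E_{\overline{j}}=-\Gamma^{j}_{ih}E_{\overline{h}},$$ $$\widetilde{\nabla}_{E_{i}}E_{j}=\Gamma^{h}_{ij}E_{h}+\tfrac12\left(\nabla_i c_{jh}+\nabla_j c_{ih}-\nabla_h c_{ij}\right)E_{\overline{h}}.$$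
   Context: Summation convention; indices $h,i,j,\dots$ range over $1,\dots,n$ and $\overline{i}=n+i$. $\Gamma^h_{ij}$ are the coefficients of $\nabla$ in local coordinates $(x^i)$ on $M$, i.e. $\nabla_{\partial_i}\partial_j=\Gamma^h_{ij}\partial_h$. The curvature is $R(X,Y)Z=\nabla_X\nabla_YZ-\nabla_Y\nabla_XZ-\nabla_{[X,Y]}Z$ with $R(\partial_i,\partial_j)\partial_k=R_{ijk}^{\ \ \ h}\partial_h$. $c_{ij}$ are the components of $c$ and $\nabla_ic_{jk}$ those of $\nabla c$. On $T^{\ast}M$ use induced coordinates $(x^i,p_i)$, where $p_i$ are the components of a covector with respect to $dx^i$; write $\partial_{\overline{i}}=\partial/\partial p_i$. The adapted frame is $E_j=\partial_j+p_a\Gamma^a_{hj}\partial_{\overline{h}}$, $E_{\overline{j}}=\partial_{\overline{j}}$. The modified Riemannian extension $\overline{g}_{\nabla,c}$ is the pseudo-Riemannian metric on $T^{\ast}M$ given by $\overline{g}_{\nabla,c}(E_i,E_j)=c_{ij}$, $\overline{g}_{\nabla,c}(E_i,E_{\overline{j}})=\overline{g}_{\nabla,c}(E_{\overline{j}},E_i)=\delta_i^j$, $\overline{g}_{\nabla,c}(E_{\overline{i}},E_{\overline{j}})=0$. (A metric linear connection with prescribed torsion is unique.) *)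

(* Defs.v *)
(* Local-coordinate formalization over a chart U of M. *)
From HB Require Import structures.
From mathcomp Require Import all_boot all_order all_algebra.
From mathcomp Require Import all_classical all_reals all_analysis.
Set Implicit Arguments. Unset Strict Implicit. Unset Printing Implicit Defensive.
Import Order.TTheory GRing.Theory Num.Theory.
Import numFieldNormedType.Exports.
Local Open Scope classical_set_scope.
Local Open Scope ring_scope.

Section Defs.
Variables (R : realType) (n : nat).

(* A point of T*M over the chart: (x, p), x = coordinates on M, p = fibre coords. *)
Definition pt := ('rV[R]_n * 'rV[R]_n)%type.

Fixpoint smooth_k {V : normedModType R} (k : nat) (f : V -> R) (A : set V) : Prop :=
  match k with
  | 0 => forall x, A x -> differentiable f x
  | k.+1 => (forall x, A x -> differentiable f x) /\
            forall v : V, smooth_k k (fun y => 'D_v f y) A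
  end.
Definition smooth_on {V : normedModType R} (f : V -> R) (A : set V) :=
  forall k, smooth_k k f A.

Definition dM (i : 'I_n) (f : 'rV[R]_n -> R) (x : 'rV[R]_n) : R :=
  'D_(delta_mx 0 i) f x.

(* coordinate index on T*M: inl i = x^i (d_i), inr i = p_i (d_{bar i}) *)
Definition idx := ('I_n + 'I_n)%type.

Definition dcoord (K : idx) (F : pt -> R) (z : pt) : R :=
  match K with
  | inl i => 'D_((delta_mx 0 i : 'rV[R]_n), (0 : 'rV[R]_n)) F z
  | inr i => 'D_((0 : 'rV[R]_n), (delta_mx 0 i : 'rV[R]_n)) F z
  end.

(* vector fields on T*M by their coordinate components *)
Definition vfield := idx -> pt -> R.
Definition act (X : vfield) (F : pt -> R) (z : pt) : R :=
  \sum_(K : idx) X K z * dcoord K F z.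
Definition bracket (X Y : vfield) : vfield :=
  fun K z => act X (Y K) z - act Y (X K) z.

(* Gam h i j x = Gamma^h_{ij}(x) *)
(* adapted frame: E (inl j) = E_j = d_j + p_a Gamma^a_{hj} d_{bar h}; E (inr j) = d_{bar j} *)
Definition frame (Gam : 'I_n -> 'I_n -> 'I_n -> 'rV[R]_n -> R) (A : idx) : vfield :=
  fun K z =>
  match A, K with
  | inl j, inl k => (j == k)%:R
  | inl j, inr h => \sum_(a < n) z.2 0 a * Gam a h j z.1
  | inr j, inl k => 0
  | inr j, inr h => (j == h)%:R
  end.

(* curvature components R_{ijk}^h of nabla (R(d_i,d_j)d_k = R_{ijk}^h d_h) *)
Definition curv (Gam : 'I_n -> 'I_n -> 'I_n -> 'rV[R]_n -> R)
  (i j k h : 'I_n) (x : 'rV[R]_n) : R :=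
  dM i (Gam h j k) x - dM j (Gam h i k) x
  + \sum_(a < n) (Gam h i a x * Gam a j k x - Gam h j a x * Gam a i k x).

(* components nabla_i c_{jk} of nabla c *)
Definition nabla_c (Gam : 'I_n -> 'I_n -> 'I_n -> 'rV[R]_n -> R)
  (c : 'I_n -> 'I_n -> 'rV[R]_n -> R) (i j k : 'I_n) (x : 'rV[R]_n) : R :=
  dM i (c j k) x - \sum_(h < n) Gam h i j x * c h k x
                 - \sum_(h < n) Gam h i k x * c j h x.

(* modified Riemannian extension in the adapted frame *)
Definition gbar (c : 'I_n -> 'I_n -> 'rV[R]_n -> R) (A B : idx) (z : pt) : R :=
  match A, B with
  | inl i, inl j => c i j z.1
  | inl i, inr j => (i == j)%:R
  | inr i, inl j => (i == j)%:R
  | inr i, inr j => 0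
  end.

(* A connection on T*M over the chart, given by its coefficients in the adapted
   frame: nabla~_{E_A} E_B = sum_D Ct A B D E_D. *)
Definition conn_vf (Gam : 'I_n -> 'I_n -> 'I_n -> 'rV[R]_n -> R)
  (Ct : idx -> idx -> idx -> pt -> R) (A B : idx) : vfield :=
  fun K z => \sum_(D : idx) Ct A B D z * frame Gam D K z.

Definition metric_compat Gam c (Ct : idx -> idx -> idx -> pt -> R) (z : pt) :=
  forall A B C : idx,
    act (frame Gam A) (gbar c B C) z
    - \sum_(D : idx) Ct A B D z * gbar c D C z
    - \sum_(D : idx) Ct A C D z * gbar c B D z = 0.

Definition torsion Gam (Ct : idx -> idx -> idx -> pt -> R) (A B : idx) : vfield :=
  fun K z => conn_vf Gam Ct A B K z - conn_vf Gam Ct B A K z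
             - bracket (frame Gam A) (frame Gam B) K z.

Definition presc_torsion Gam (A B : idx) : vfield :=
  fun K z =>
  match A, B with
  | inl i, inl j =>
      \sum_(r < n) (- \sum_(s < n) z.2 0 s * curv Gam i j r s z.1) * frame Gam (inr r) K z
  | _, _ => 0
  end.

End Defs.

(* Main.v *)
Require Import Defs.
From HB Require Import structures.
From mathcomp Require Import all_boot all_order all_algebra.
From mathcomp Require Import all_classical all_reals all_analysis.
From mathcomp Require Import ring lra.
Import Order.TTheory GRing.Theory Num.Theory.
Import numFieldNormedType.Exports.
Local Open Scope classical_set_scope.
Local Open Scope ring_scope.

Section Hh.
Variables (R : realType) (n : nat).

Lemma der_congr (V : normedModType R) (f g : V -> R) (a v : V) :
  (forall h : R, f (h *: v + a) - f a = g (h *: v + a) - g a) ->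
  'D_v f a = 'D_v g a.
Proof.
move=> H; rewrite /derive.
suff -> : (fun h0 : R => h0^-1 *: (f (h0 *: v + a) - f a)) =
  (fun h0 => h0^-1 *: (g (h0 *: v + a) - g a)) by [].
by apply: funext => h; rewrite H.
Qed.

Lemma d_fst (G : 'rV[R]_n -> R) (z : pt R n) v :
  'D_((v, 0) : pt R n) (fun z => G z.1) z = 'D_v G z.1.
Proof. by rewrite /derive. Qed.

Lemma d_fst0 (G : 'rV[R]_n -> R) (z : pt R n) w :
  'D_((0, w) : pt R n) (fun z => G z.1) z = 0.
Proof.
rewrite (@der_congr _ _ (cst (G z.1))) ?derive_cst // => h /=.
by rewrite scaler0 add0r !subrr.
Qed.

Lemma d_cst (k : R) (z : pt R n) v : 'D_v (fun _ : pt R n => k) z = 0.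
Proof. exact: derive_cst. Qed.

Lemma d_x (G : 'I_n -> 'rV[R]_n -> R) (z : pt R n) v :
  (forall a, derivable (G a) z.1 v) ->
  'D_((v, 0) : pt R n) (fun z : pt R n => \sum_(a < n) z.2 0 a * G a z.1) z =
  \sum_(a < n) z.2 0 a * 'D_v (G a) z.1.
Proof.
move=> dG.
rewrite (@der_congr _ _ (fun z' : pt R n => \sum_(a < n) z.2 0 a * G a z'.1)); last first.
  by move=> h /=; rewrite scaler0 add0r.
rewrite (@d_fst (fun y => \sum_(a < n) z.2 0 a * G a y)).
have -> : (fun y : 'rV[R]_n => \sum_(a < n) z.2 0 a * G a y) = \sum_(a < n) (fun y : 'rV[R]_n => z.2 0 a * G a y).
  by rewrite fct_sumE.
rewrite derive_sum; last by move=> a; exact: derivableZ.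
by apply: eq_bigr => a _; rewrite deriveMl.
Qed.

Lemma d_p (G : 'I_n -> 'rV[R]_n -> R) (z : pt R n) m :
  'D_((0, delta_mx 0 m) : pt R n) (fun z : pt R n => \sum_(a < n) z.2 0 a * G a z.1) z =
  G m z.1.
Proof.
rewrite /derive; apply: cvg_lim => //.
apply: cvg_trans (cvg_cst (G m z.1)).
apply: near_eq_cvg; near=> h.
have hn0 : h != 0 by near: h; exact: nbhs_dnbhs_neq.
rewrite /= scaler0 add0r -sumrB.
rewrite (eq_bigr (fun a => h * ((m == a)%:R * G a z.1))); last first.
  by move=> a _; rewrite !mxE eqxx /= eq_sym mulrDl addrK mulrA.
rewrite -mulr_sumr (bigD1 m) //= eqxx mul1r big1 ?addr0; last first.
  by move=> a /negPf; rewrite eq_sym => ->; rewrite mul0r.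
by rewrite [_ *: _]mulrA mulVf // mul1r.
Unshelve. all: try by end_near. all: apply: Proper_dnbhs_numFieldType. Qed.
End Hh.

Section Main.
Variables (R : realType) (n : nat).
Variables (Gam : 'I_n -> 'I_n -> 'I_n -> 'rV[R]_n -> R) (c : 'I_n -> 'I_n -> 'rV[R]_n -> R)
  (Ct : idx n -> idx n -> idx n -> pt R n -> R) (z : pt R n).

Lemma sum_idx (F : idx n -> R) :
  \sum_(K : idx n) F K = \sum_(k < n) F (inl k) + \sum_(k < n) F (inr k).
Proof. by rewrite big_sumType. Qed.

Lemma sum_delta (i : 'I_n) (F : 'I_n -> R) : \sum_(k < n) (i == k)%:R * F k = F i.
Proof.
rewrite (bigD1 i) //= eqxx mul1r big1 ?addr0 // => k /negPf.
by rewrite eq_sym => ->; rewrite mul0r.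
Qed.

Lemma sum_delta_r (i : 'I_n) (F : 'I_n -> R) : \sum_(k < n) F k * (k == i)%:R = F i.
Proof.
rewrite -[RHS](sum_delta i); apply: eq_bigr => k _; by rewrite mulrC eq_sym.
Qed.

Lemma sum0r' (F : 'I_n -> R) : \sum_(k < n) F k * 0 = 0.
Proof. by rewrite big1 // => k _; rewrite mulr0. Qed.

Lemma sum0l' (F : 'I_n -> R) : \sum_(k < n) 0 * F k = 0.
Proof. by rewrite big1 // => k _; rewrite mul0r. Qed.

Lemma dc_cst K (k : R) : dcoord K (fun _ : pt R n => k) z = 0.
Proof. by case: K => i; rewrite /dcoord; exact: derive_cst. Qed.

Lemma act_split (X : vfield R n) F : act X F z =
  \sum_(k < n) X (inl k) z * dcoord (inl k) F z +
  \sum_(k < n) X (inr k) z * dcoord (inr k) F z.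
Proof. by rewrite /act sum_idx. Qed.

Lemma act_cst (X : vfield R n) (k : R) : act X (fun _ => k) z = 0.
Proof. by rewrite /act big1 // => K _; rewrite dc_cst mulr0. Qed.

Definition ev (A B C : idx n) : R :=
  match A, B, C with inl i, inl j, inl m => dM i (c j m) z.1 | _, _, _ => 0 end.

Lemma e_val A B C : act (frame Gam A) (gbar c B C) z = ev A B C.
Proof.
case: B => j; case: C => m.
- have -> : gbar c (inl j) (inl m) = fun z => c j m z.1 by [].
  rewrite act_split.
  have h1 : forall k, dcoord (inl k) (fun z : pt R n => c j m z.1) z = dM k (c j m) z.1.
    by move=> k; exact: d_fst.
  have h2 : forall k, dcoord (inr k) (fun z : pt R n => c j m z.1) z = 0.
    by move=> k; exact: d_fst0.
  under eq_bigr do rewrite h1.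
  under [X in _ + X]eq_bigr do rewrite h2.
  rewrite sum0r' addr0.
  case: A => i /=; rewrite /frame ?sum_delta //.
  by rewrite sum0l'.
- have -> : gbar c (inl j) (inr m) = fun _ => (j == m)%:R by [].
  by rewrite act_cst; case: A.
- have -> : gbar c (inr j) (inl m) = fun _ => (j == m)%:R by [].
  by rewrite act_cst; case: A.
- have -> : gbar c (inr j) (inr m) = fun _ => 0 by [].
  by rewrite act_cst; case: A.
Qed.

Definition P (m i : 'I_n) := \sum_(a < n) z.2 0 a * Gam a m i z.1.

Lemma act_frame_inr A B h
  (dG : forall a h j k, derivable (Gam a h j) z.1 (delta_mx 0 k)) :
  act (frame Gam A) (frame Gam B (inr h)) z =
  match A, B with
  | inl i, inl j => \sum_(a < n) z.2 0 a * dM i (Gam a h j) z.1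
                    + \sum_(m < n) P m i * Gam m h j z.1
  | inr i, inl j => Gam i h j z.1
  | _, inr _ => 0 end.
Proof.
case: B => j; last first.
  have -> : frame Gam (inr j) (inr h) = fun _ => (j == h)%:R by [].
  by rewrite act_cst; case: A.
have -> : frame Gam (inl j) (inr h) =
  fun z : pt R n => \sum_(a < n) z.2 0 a * Gam a h j z.1 by [].
rewrite act_split.
have h1 : forall k, dcoord (inl k) (fun z : pt R n => \sum_(a < n) z.2 0 a * Gam a h j z.1) z
   = \sum_(a < n) z.2 0 a * dM k (Gam a h j) z.1.
  by move=> k; exact: (@d_x R n (fun a => Gam a h j)).
have h2 : forall k, dcoord (inr k) (fun z : pt R n => \sum_(a < n) z.2 0 a * Gam a h j z.1) z
   = Gam k h j z.1.
  by move=> k; exact: (@d_p R n (fun a => Gam a h j)).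
under eq_bigr do rewrite h1.
under [X in _ + X]eq_bigr do rewrite h2.
case: A => i /=; rewrite /frame ?sum_delta //.
by rewrite sum0l' add0r.
Qed.

Lemma frame_inl_cst B k : frame Gam B (inl k) =
  fun _ => match B with inl j => (j == k)%:R | inr _ => 0 end.
Proof. by case: B. Qed.

Lemma br_inl A B k : bracket (frame Gam A) (frame Gam B) (inl k) z = 0.
Proof. by rewrite /bracket !frame_inl_cst !act_cst subrr. Qed.

Lemma conn_inl A B k : conn_vf Gam Ct A B (inl k) z = Ct A B (inl k) z.
Proof.
rewrite /conn_vf sum_idx /frame sum_delta_r.
by rewrite sum0r' addr0.
Qed.

Lemma conn_inr A B h : conn_vf Gam Ct A B (inr h) z =
  \sum_(k < n) Ct A B (inl k) z * P h k + Ct A B (inr h) z.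
Proof. by rewrite /conn_vf sum_idx /frame sum_delta_r. Qed.

Lemma presc_inl A B k : presc_torsion Gam A B (inl k) z = 0.
Proof. by case: A => i; case: B => j //=; rewrite /frame sum0r'. Qed.

Lemma presc_inr_ll i j h : presc_torsion Gam (inl i) (inl j) (inr h) z =
  - \sum_(s < n) z.2 0 s * curv Gam i j h s z.1.
Proof. by rewrite /= /frame sum_delta_r. Qed.

Definition Svf (A B : idx n) (h : 'I_n) : R :=
  match A, B with
  | inl i, inr j => - Gam j h i z.1
  | inr i, inl j => Gam i h j z.1
  | _, _ => 0 end.

Section Hyps.
Hypothesis HT : forall A B K, torsion Gam Ct A B K z = presc_torsion Gam A B K z.
Hypothesis dG : forall a h j k, derivable (Gam a h j) z.1 (delta_mx 0 k).
Hypothesis HGs : forall h i j, Gam h i j z.1 = Gam h j i z.1.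
Hypothesis HdGs : forall a h j k, dM k (Gam a h j) z.1 = dM k (Gam a j h) z.1.

Lemma Tl A B k : Ct A B (inl k) z = Ct B A (inl k) z.
Proof.
have := HT A B (inl k); rewrite /torsion conn_inl conn_inl br_inl presc_inl.
by move/eqP; rewrite subr0 subr_eq0 => /eqP.
Qed.

Lemma Tr A B h : Ct A B (inr h) z - Ct B A (inr h) z =
  bracket (frame Gam A) (frame Gam B) (inr h) z + presc_torsion Gam A B (inr h) z.
Proof.
have := HT A B (inr h); rewrite /torsion !conn_inr.
under [X in _ - (X + _) - _ = _]eq_bigr do rewrite -Tl.
lra.
Qed.

Lemma curv_cancel i j h :
  bracket (frame Gam (inl i)) (frame Gam (inl j)) (inr h) z
  + presc_torsion Gam (inl i) (inl j) (inr h) z = 0.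
Proof.
rewrite presc_inr_ll /bracket !act_frame_inr //.
have eP : forall i j, \sum_(m < n) P m i * Gam m h j z.1 =
   \sum_(a < n) z.2 0 a * \sum_(m < n) Gam a m i z.1 * Gam m h j z.1.
  move=> i' j'; rewrite /P.
  under eq_bigr do rewrite mulr_suml.
  rewrite exchange_big /=; apply: eq_bigr => a _.
  by rewrite mulr_sumr; apply: eq_bigr => m _; rewrite mulrA.
rewrite !eP.
suff -> : \sum_(s < n) z.2 0 s * curv Gam i j h s z.1 =
  \sum_(a < n) z.2 0 a * dM i (Gam a h j) z.1
  + \sum_(a < n) z.2 0 a * (\sum_(m < n) Gam a m i z.1 * Gam m h j z.1)
  - \sum_(a < n) z.2 0 a * dM j (Gam a h i) z.1
  - \sum_(a < n) z.2 0 a * (\sum_(m < n) Gam a m j z.1 * Gam m h i z.1).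
  lra.
rewrite -big_split -sumrB -sumrB; apply: eq_bigr => a _ /=.
rewrite /curv (HdGs a h j) (HdGs a h i).
have -> : \sum_(m < n) (Gam a i m z.1 * Gam m j h z.1 - Gam a j m z.1 * Gam m i h z.1)
  = \sum_(m < n) Gam a m i z.1 * Gam m h j z.1 - \sum_(m < n) Gam a m j z.1 * Gam m h i z.1.
  rewrite -sumrB; apply: eq_bigr => m _.
  by rewrite (HGs a i m) (HGs m j h) (HGs a j m) (HGs m i h).
ring.
Qed.

Lemma Sv_val A B h : Ct A B (inr h) z - Ct B A (inr h) z = Svf A B h.
Proof.
rewrite Tr; case: A => i; case: B => j.
- exact: curv_cancel.
- by rewrite /bracket !act_frame_inr //= addr0 sub0r.
- by rewrite /bracket !act_frame_inr //= addr0 subr0.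
- by rewrite /bracket !act_frame_inr //= addr0 subr0.
Qed.

Hypothesis Hmet : metric_compat Gam c Ct z.
Hypothesis Hcs : forall i j, c i j z.1 = c j i z.1.

Definition L (A B C : idx n) := \sum_(D : idx n) Ct A B D z * gbar c D C z.

Lemma Lr A B m : L A B (inr m) = Ct A B (inl m) z.
Proof. by rewrite /L sum_idx /= sum_delta_r sum0r' addr0. Qed.

Lemma Ll A B m : L A B (inl m) =
  \sum_(k < n) Ct A B (inl k) z * c k m z.1 + Ct A B (inr m) z.
Proof. by rewrite /L sum_idx /= sum_delta_r. Qed.

Lemma gsym B D : gbar c B D z = gbar c D B z.
Proof. by case: B => i; case: D => j //=; rewrite eq_sym. Qed.

Lemma Mlem A B C : L A B C + L A C B = ev A B C.
Proof.
have := Hmet A B C; rewrite e_val.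
under [X in _ - _ - X = _]eq_bigr do rewrite gsym.
rewrite -/(L A B C) -/(L A C B); lra.
Qed.

Definition Slow (A B C : idx n) : R :=
  match C with inl m => Svf A B m | inr _ => 0 end.

Lemma Tlem A B C : L A B C - L B A C = Slow A B C.
Proof.
case: C => m /=.
- rewrite !Ll -(Sv_val A B m).
  under [X in _ - (X + _) = _]eq_bigr do rewrite -Tl.
  lra.
- by rewrite !Lr Tl subrr.
Qed.

Lemma Kos A B C : L A B C = 2^-1 * (Slow A B C - Slow B C A + Slow C A B
   + ev B A C - ev C B A + ev A B C).
Proof.
have := Mlem A B C; have := Mlem B A C; have := Mlem C B A.
have := Tlem A B C; have := Tlem B C A; have := Tlem C A B.
lra.
Qed.

End Hyps.
End Main.

Theorem proposition2 (R : realType) (n : nat) (U : set 'rV[R]_n)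
  (Gam : 'I_n -> 'I_n -> 'I_n -> 'rV[R]_n -> R)
  (c : 'I_n -> 'I_n -> 'rV[R]_n -> R)
  (Ct : idx n -> idx n -> idx n -> pt R n -> R) :
  open U ->
  (forall h i j, smooth_on (Gam h i j) U) ->
  (forall h i j x, U x -> Gam h i j x = Gam h j i x) ->
  (forall i j, smooth_on (c i j) U) ->
  (forall i j x, U x -> c i j x = c j i x) ->
  (forall A B D, smooth_on (Ct A B D) [set z | U z.1]) ->
  (forall z, U z.1 -> metric_compat Gam c Ct z) ->
  (forall A B K z, U z.1 -> torsion Gam Ct A B K z = presc_torsion Gam A B K z) ->
  forall z : pt R n, U z.1 ->
  forall i j : 'I_n,
    (forall K, Ct (inr i) (inr j) K z = 0) /\
    (forall K, Ct (inr i) (inl j) K z = 0) /\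
    (forall K, Ct (inl i) (inr j) K z =
       match K with inl _ => 0 | inr h => - Gam j i h z.1 end) /\
    (forall K, Ct (inl i) (inl j) K z =
       match K with
       | inl h => Gam h i j z.1
       | inr h => 2^-1 * (nabla_c Gam c i j h z.1 + nabla_c Gam c j i h z.1
                          - nabla_c Gam c h i j z.1)
       end).
Proof.
move=> oU HGsm HGs HCsm Hcs _ Hmet Htor z Uz i j.
have nU : \forall y \near z.1, U y := open_nbhs_nbhs (conj oU Uz).
have dG : forall a h j k, derivable (Gam a h j) z.1 (delta_mx 0 k).
  by move=> a h j' k; apply: diff_derivable; exact: (HGsm a h j' 0%N z.1 Uz).
have HGs' : forall h i j, Gam h i j z.1 = Gam h j i z.1 by move=> *; exact: HGs.
have HdGs : forall a h j k, dM k (Gam a h j) z.1 = dM k (Gam a j h) z.1.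
  move=> a h j' k; apply: near_eq_derive; apply: filterS nU => y Uy; exact: HGs.
have HdCs : forall k i j, dM k (c i j) z.1 = dM k (c j i) z.1.
  move=> k i' j'; apply: near_eq_derive; apply: filterS nU => y Uy; exact: Hcs.
have Hcs' : forall i j, c i j z.1 = c j i z.1 by move=> *; exact: Hcs.
have HT : forall A B K, torsion Gam Ct A B K z = presc_torsion Gam A B K z.
  by move=> *; exact: Htor.
have Hm := Hmet z Uz.
have K := @Kos R n Gam c Ct z HT dG HGs' HdGs Hm Hcs'.
have CtL : forall A B m, Ct A B (inl m) z = L R n c Ct z A B (inr m).
  by move=> *; rewrite Lr.
have CtR : forall A B m, Ct A B (inr m) z =
    L R n c Ct z A B (inl m) - \sum_(k < n) Ct A B (inl k) z * c k m z.1.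
  by move=> *; rewrite Ll; ring.
have c1l : forall m, Ct (inr i) (inr j) (inl m) z = 0.
  by move=> m; rewrite CtL K /Slow /Svf /ev /=; lra.
have c2l : forall m, Ct (inr i) (inl j) (inl m) z = 0.
  by move=> m; rewrite CtL K /Slow /Svf /ev /=; lra.
have c3l : forall m, Ct (inl i) (inr j) (inl m) z = 0.
  by move=> m; rewrite CtL K /Slow /Svf /ev /=; lra.
have c4l : forall m, Ct (inl i) (inl j) (inl m) z = Gam m i j z.1.
  by move=> m; rewrite CtL K /Slow /Svf /ev /=; have := HGs' m j i; lra.
split; [|split; [|split]]; case=> m //.
- rewrite CtR K /Slow /Svf /ev /=.
  under eq_bigr do rewrite c1l.
  rewrite sum0l'; lra.
- rewrite CtR K /Slow /Svf /ev /=.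
  under eq_bigr do rewrite c2l.
  rewrite sum0l'; have := HGs' i m j; lra.
- rewrite CtR K /Slow /Svf /ev /=.
  under eq_bigr do rewrite c3l.
  rewrite sum0l'; have := HGs' j m i; lra.
- rewrite CtR K /Slow /Svf /ev /=.
  under eq_bigr do rewrite c4l.
  have e1 : \sum_(k < n) Gam k j i z.1 * c k m z.1 = \sum_(k < n) Gam k i j z.1 * c k m z.1.
    by apply: eq_bigr => k _; rewrite HGs'.
  have e2 : \sum_(k < n) Gam k m i z.1 * c k j z.1 = \sum_(k < n) Gam k i m z.1 * c j k z.1.
    by apply: eq_bigr => k _; rewrite (HGs' k m i) (Hcs' k j).
  have e3 : \sum_(k < n) Gam k m j z.1 * c i k z.1 = \sum_(k < n) Gam k j m z.1 * c i k z.1.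
    by apply: eq_bigr => k _; rewrite (HGs' k m j).
  rewrite /nabla_c e1 e2 e3 (HdCs m j i); lra.
Qed.
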